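(* Let $p$ be a prime, $n\ge1$, and let $1\to T^n\to G\xrightarrow{\pi} C_p\to 1$ be an extension of compact Lie groups. Then there exist a closed normal subgroup $N$ of $G$ and an integer $l$ with $1\le l\le n$ such that $G/N$ is a split extension of an $l$-torus by $C_p$, i.e. there is a split short exact sequence $1\to T^l\to G/N\to C_p\to 1$. *)

(* Defs.v *)
From HB Require Import structures.
From mathcomp Require Import all_boot all_order all_algebra.
From mathcomp Require Import all_classical all_reals all_analysis.
Import numFieldTopology.Exports.
Set Implicit Arguments. Unset Strict Implicit. Unset Printing Implicit Defensive.
Import Order.TTheory GRing.Theory Num.Theory.
Local Open Scope classical_set_scope.
Local Open Scope ring_scope.

Record topGroup := TopGroup {
  tg_car :> topologicalType;
  tg_mul : tg_car -> tg_car -> tg_car;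
  tg_inv : tg_car -> tg_car;
  tg_one : tg_car;
  tg_mulA : forall x y z, tg_mul x (tg_mul y z) = tg_mul (tg_mul x y) z;
  tg_mul1g : forall x, tg_mul tg_one x = x;
  tg_mulg1 : forall x, tg_mul x tg_one = x;
  tg_mulVg : forall x, tg_mul (tg_inv x) x = tg_one;
  tg_mulgV : forall x, tg_mul x (tg_inv x) = tg_one;
  tg_mul_cont : continuous (fun xy : tg_car * tg_car => tg_mul xy.1 xy.2);
  tg_inv_cont : continuous tg_inv
}.

Definition tg_hom (G H : topGroup) (f : G -> H) :=
  forall x y, f (tg_mul x y) = tg_mul (f x) (f y).

Definition closed_normal_subgroup (G : topGroup) (N : set G) :=
  [/\ closed N, N (tg_one G),
      (forall x y, N x -> N y -> N (tg_mul x y)),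
      (forall x, N x -> N (tg_inv x)) &
      (forall g x, N x -> N (tg_mul (tg_mul g x) (tg_inv g)))].

(* An embedding of the l-torus T^l = R^l / Z^l into H: a continuous group
   homomorphism e : (R^l, +) -> H whose kernel is exactly Z^l.  It induces a
   continuous injective homomorphism R^l/Z^l -> H, which (T^l being compact and
   H Hausdorff) is an isomorphism of topological groups onto its image. *)
Definition torus_embedding (R : realType) (l : nat) (H : topGroup)
    (e : 'rV[R]_l -> H) :=
  [/\ continuous e,
      (forall x y, e (x + y) = tg_mul (e x) (e y)) &
      (forall x, e x = tg_one H <-> forall i, x ord0 i \is a Num.int)].

(* A continuous surjective homomorphism q : H -> C_p (C_p = 'Z_p, additive,
   discrete) whose kernel is exactly the image of the torus embedding e:
   i.e. a short exact sequence 1 -> T^l --e--> H --q--> C_p -> 1. *)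
Definition torus_ext (R : realType) (p l : nat) (H : topGroup)
    (e : 'rV[R]_l -> H) (q : H -> 'Z_p) :=
  [/\ torus_embedding e,
      (forall x y, q (tg_mul x y) = q x + q y),
      (forall k, exists h, q h = k),
      (forall k, open (q @^-1` [set k])) &
      (forall h, q h = 0 <-> exists x, e x = h)].

(* Main.v *)
Require Import Defs.
From HB Require Import structures.
From mathcomp Require Import all_boot all_order all_algebra.
From mathcomp Require Import all_classical all_reals all_analysis.
Import numFieldTopology.Exports.
Import Order.TTheory GRing.Theory Num.Theory.
Local Open Scope classical_set_scope.
Local Open Scope ring_scope.

Definition GT (G : topGroup) : Type := tg_car G.
HB.instance Definition _ (G : topGroup) := Choice.on (GT G).
HB.instance Definition _ (G : topGroup) :=
  isGroup.Build (GT G) (@tg_mulA G) (@tg_mul1g G) (@tg_mulg1 G) (@tg_mulVg G) (@tg_mulgV G).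

Lemma cont_loc (T U : topologicalType) (f : T -> U) :
  (forall x, exists g : T -> U, (\forall y \near x, g y = f y) /\ {for x, continuous g}) ->
  continuous f.
Proof.
move=> H x; have [g [Hn Hc]] := H x.
have fx : g x = f x by exact: (nbhs_singleton Hn).
apply: cvg_trans (near_eq_cvg Hn) _; rewrite -fx; exact: Hc.
Qed.

Lemma near_fst {T U : topologicalType} (x : T) (y : U) (A : set T) :
  nbhs x A -> \forall uv \near (x, y), A uv.1.
Proof. by move=> Ax; apply: (@cvg_fst _ _ (nbhs x) (nbhs y) _). Qed.

Lemma near_snd {T U : topologicalType} (x : T) (y : U) (A : set U) :
  nbhs y A -> \forall uv \near (x, y), A uv.2.
Proof. by move=> Ax; apply: (@cvg_snd _ _ (nbhs x) (nbhs y) _). Qed.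

Section TG.
Variable G : topGroup.
Local Open Scope group_scope.

Lemma mul_cont (T : topologicalType) (f g : T -> GT G) (x : T) :
  {for x, continuous f} -> {for x, continuous g} ->
  {for x, continuous (fun w => f w * g w)}.
Proof.
move=> cf cg.
apply: (@continuous_comp _ _ _ (fun w => (f w, g w))
   (fun xy : tg_car G * tg_car G => tg_mul xy.1 xy.2)).
  exact: cvg_pair.
exact: tg_mul_cont.
Qed.

Lemma inv_cont (T : topologicalType) (f : T -> GT G) (x : T) :
  {for x, continuous f} -> {for x, continuous (fun w => (f w)^-1)}.
Proof.
move=> cf; apply: (@continuous_comp _ _ _ f (@tg_inv G)) => //.
exact: tg_inv_cont.
Qed.

Lemma exp_cont (T : topologicalType) (f : T -> GT G) (x : T) m :
  {for x, continuous f} -> {for x, continuous (fun w => (f w) ^+ m)}.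
Proof.
move=> cf; elim: m => [|m IH].
  exact: cvg_cst.
have -> : (fun w => f w ^+ m.+1) = (fun w => f w * f w ^+ m).
  by apply/funext => w; rewrite expgS.
exact: mul_cont.
Qed.

End TG.
Section Main.
Variables (R : realType) (p n : nat) (G : topGroup) (e : 'rV[R]_n -> G) (pi : G -> 'Z_p).
Hypotheses (pP : prime p) (Ghaus : hausdorff_space G).
Hypotheses (econt : continuous e) (ehom : forall x y, e (x + y) = tg_mul (e x) (e y))
  (eker : forall x, e x = tg_one G <-> forall i, x ord0 i \is a Num.int)
  (pihom : forall x y, pi (tg_mul x y) = pi x + pi y)
  (piopen : forall k, open (pi @^-1` [set k]))
  (pisurj : forall k, exists h, pi h = k)
  (piker : forall h, pi h = 0 <-> exists x, e x = h).
Variables (g : G).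
Hypothesis (pig : pi g = 1).

Local Notation X := (GT G).
Local Open Scope group_scope.

Lemma p_gt1 : (1 < p)%N. Proof. exact: prime_gt1. Qed.
Lemma p_gt0 : (0 < p)%N. Proof. exact: prime_gt0. Qed.

Definition vz (k : 'Z_p) : nat := nat_of_ord k.
Lemma vz_lt k : (vz k < p)%N.
Proof. by rewrite -[X in (_ < X)%N](Zp_cast p_gt1) ltn_ord. Qed.
Lemma vzK k : ((vz k)%:R = k)%R.
Proof. exact: natr_Zp. Qed.
Lemma vz_nat m : vz (m%:R)%R = (m %% p)%N.
Proof. exact: val_Zp_nat p_gt1 m. Qed.
Lemma vz0 : vz 0%R = 0%N.
Proof. by []. Qed.
Lemma vzD a b : vz (a + b)%R = ((vz a + vz b) %% p)%N.
Proof. by rewrite -vz_nat natrD !vzK. Qed.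

Lemma piM (x y : X) : pi (x * y) = (pi x + pi y)%R.
Proof. exact: pihom. Qed.
Lemma pi1 : pi (1 : X) = 0%R.
Proof.
have := piM 1 1; rewrite mulg1 => H.
by apply: (@addrI _ (pi (1 : X))); rewrite addr0 -H.
Qed.
Lemma piV (x : X) : pi x^-1 = (- pi x)%R.
Proof. by apply/eqP; rewrite -subr_eq0 opprK addrC -piM mulgV pi1. Qed.
Lemma piX (x : X) m : pi (x ^+ m) = (pi x *+ m)%R.
Proof. elim: m => [|m IH]; first by rewrite pi1. by rewrite expgS piM IH mulrS. Qed.
Lemma pigX m : pi ((g : X) ^+ m) = (m%:R)%R.
Proof. by rewrite piX pig. Qed.

Definition T (x : X) := pi x = 0%R.

Lemma comm_T (x y : X) : T x -> T y -> commute x y.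
Proof.
move=> /piker [a <-] /piker [b <-].
rewrite /commute; apply: (etrans (esym (ehom a b))); rewrite addrC; exact: ehom.
Qed.

Definition t0 : X := (g : X) ^+ p.
Lemma T_t0 : T t0.
Proof. by rewrite /T /t0 pigX pchar_Zp // p_gt1. Qed.

Definition vp (h : X) := vz (pi h).
Definition tp (h : X) : X := h * ((g : X) ^+ vp h)^-1.
Lemma T_tp h : T (tp h).
Proof. by rewrite /T /tp piM piV pigX /vp vzK subrr. Qed.
Lemma tpK h : tp h * (g : X) ^+ vp h = h.
Proof. by rewrite /tp mulgVK. Qed.

Lemma t0_central (h : X) : commute t0 h.
Proof.
rewrite -(tpK h); apply: commuteM; first exact: comm_T T_t0 (T_tp h).
exact: commuteX2.
Qed.

Definition z : X := t0^-1.
Lemma zX_central m (h : X) : commute (z ^+ m) h.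
Proof.
apply/commute_sym/commuteX/commuteV/commute_sym; exact: t0_central.
Qed.
Lemma T_z : T z.
Proof. by rewrite /T /z piV T_t0 oppr0. Qed.
Lemma pi_zX m : pi (z ^+ m) = 0%R.
Proof. by rewrite piX T_z mul0rn. Qed.

Definition cr (a b : 'Z_p) : nat := ((vz a + vz b) %/ p)%N.
Definition star (x y : X) : X := x * y * z ^+ cr (pi x) (pi y).
Definition istar (x : X) : X := x^-1 * (z ^+ cr (pi x) (- pi x)%R)^-1.

Lemma pi_star x y : pi (star x y) = (pi x + pi y)%R.
Proof. by rewrite /star !piM pi_zX addr0. Qed.
Lemma pi_istar x : pi (istar x) = (- pi x)%R.
Proof. by rewrite /istar piM !piV pi_zX oppr0 addr0. Qed.

Lemma div_key u v : ((u + v %% p) %/ p + v %/ p = (u + v) %/ p)%N.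
Proof.
by rewrite -divnDMl ?p_gt0 // -addnA [(_ %% p + _)%N]addnC -divn_eq.
Qed.

Lemma cr_cocycle a b c :
  (cr a b + cr (a + b)%R c = cr b c + cr a (b + c)%R)%N.
Proof.
rewrite /cr !vzD.
have h1 := div_key (vz c) (vz a + vz b).
have h2 := div_key (vz a) (vz b + vz c).
rewrite addnC [((_ %% p) + vz c)%N]addnC h1 [(_ %/ p + _)%N]addnC h2.
by rewrite addnC addnA.
Qed.

Lemma cr0l b : cr 0 b = 0%N.
Proof. by rewrite /cr vz0 add0n divn_small // vz_lt. Qed.
Lemma cr0r b : cr b 0 = 0%N.
Proof. by rewrite /cr vz0 addn0 divn_small // vz_lt. Qed.

Lemma star_assoc x y w : star x (star y w) = star (star x y) w.
Proof.
rewrite /star !pi_star.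
rewrite -(mulgA (x * y)) (zX_central _ w) !mulgA -!mulgA -!expgnDr.
rewrite cr_cocycle addnC.
by rewrite !mulgA.
Qed.

Lemma star1x x : star 1 x = x.
Proof. by rewrite /star pi1 cr0l mul1g mulg1. Qed.
Lemma starx1 x : star x 1 = x.
Proof. by rewrite /star pi1 cr0r !mulg1. Qed.
Lemma starVx x : star (istar x) x = 1.
Proof.
rewrite /star pi_istar /istar.
set c := cr (pi x) (- pi x)%R.
have -> : cr (- pi x)%R (pi x) = c by rewrite /c /cr addnC.
have C : commute (z ^+ c)^-1 x.
  by apply/commute_sym/commuteV/commute_sym/zX_central.
by rewrite -(mulgA _ _ x) C mulgA mulVg mul1g mulVg.
Qed.
Lemma starxV x : star x (istar x) = 1.
Proof.
rewrite /star pi_istar /istar.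
by rewrite !mulgA mulgV mul1g mulVg.
Qed.

Lemma T_star x y : T x -> T y -> star x y = x * y.
Proof. by rewrite /T /star => -> ->; rewrite cr0l mulg1. Qed.


Lemma near_pi (x : X) : nbhs x (pi @^-1` [set pi x]).
Proof. by apply: open_nbhs_nbhs; split => //; exact: piopen. Qed.

Lemma star_cont : continuous (fun xy : tg_car G * tg_car G => star xy.1 xy.2).
Proof.
apply: cont_loc => -[x y].
exists (fun uv : tg_car G * tg_car G => (uv.1 : X) * uv.2 * z ^+ cr (pi x) (pi y)).
have N1 := @near_fst _ _ x y _ (near_pi x).
have N2 := @near_snd _ _ x y _ (near_pi y).
split.
  near=> uv.
  have H1 : pi uv.1 = pi x by near: uv; exact: N1.
  have H2 : pi uv.2 = pi y by near: uv; exact: N2.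
  by rewrite /star H1 H2.
apply: (@mul_cont G (tg_car G * tg_car G)%type (fun uv => (uv.1 : X) * uv.2)).
  apply: mul_cont; [exact: cvg_fst | exact: cvg_snd].
exact: cvg_cst.
Unshelve. all: by end_near.
Qed.

Lemma istar_cont : continuous istar.
Proof.
apply: cont_loc => x.
exists (fun u : X => u^-1 * (z ^+ cr (pi x) (- pi x)%R)^-1).
split.
  by apply: filterS (near_pi x) => u /= H; rewrite /istar H.
apply: (@mul_cont G X (fun u : X => u^-1)).
  by apply: inv_cont.
exact: cvg_cst.
Qed.

Lemma T1 : T 1. Proof. exact: pi1. Qed.
Lemma TM x y : T x -> T y -> T (x * y).
Proof. by rewrite /T piM => -> ->; rewrite addr0. Qed.
Lemma TV x : T x -> T x^-1.
Proof. by rewrite /T piV => ->; rewrite oppr0. Qed.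
Lemma TX x m : T x -> T (x ^+ m).
Proof. by rewrite /T piX => ->; rewrite mul0rn. Qed.
Lemma TJ x y : T x -> T (x ^ y).
Proof. by rewrite /T /conjg !piM piV => ->; rewrite add0r addNr. Qed.

Lemma t0X_central m h : commute (t0 ^+ m) h.
Proof. by apply/commute_sym/commuteX/commute_sym/t0_central. Qed.

Definition mk (t : X) (a : nat) : X := t * (g : X) ^+ a.

Lemma pi_mk t a : T t -> pi (mk t a) = (a%:R)%R.
Proof. by rewrite /mk piM pigX => ->; rewrite add0r. Qed.
Lemma vp_mk t a : T t -> (a < p)%N -> vp (mk t a) = a.
Proof. by move=> Tt ap; rewrite /vp pi_mk // vz_nat modn_small. Qed.
Lemma tp_mk t a : T t -> (a < p)%N -> tp (mk t a) = t.
Proof. by move=> Tt ap; rewrite /tp vp_mk // /mk mulgK. Qed.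
Lemma mk_tp h : mk (tp h) (vp h) = h.
Proof. exact: tpK. Qed.
Lemma vp_lt h : (vp h < p)%N.
Proof. exact: vz_lt. Qed.

Lemma gX_split a b :
  (g : X) ^+ (a + b) = t0 ^+ ((a + b) %/ p) * (g : X) ^+ ((a + b) %% p).
Proof.
by rewrite {1}(divn_eq (a + b) p) expgnDr mulnC expgnA.
Qed.

Lemma mk_mul t1 t2 a b :
  mk t1 a * mk t2 b =
  mk (t1 * t2 ^ ((g : X) ^+ a)^-1 * t0 ^+ ((a + b) %/ p)) ((a + b) %% p).
Proof.
rewrite /mk /conjg invgK.
rewrite -!mulgA; congr (t1 * (_ * (t2 * _))).
by rewrite -gX_split expgnDr mulKg.
Qed.

Lemma cr_mk t1 t2 a b : T t1 -> T t2 -> (a < p)%N -> (b < p)%N ->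
  cr (pi (mk t1 a)) (pi (mk t2 b)) = ((a + b) %/ p)%N.
Proof.
move=> T1 T2 ap bp.
by rewrite /cr !pi_mk // !vz_nat !modn_small.
Qed.

Lemma cancel_c (A B w : X) : commute w B -> A * w * B * w^-1 = A * B.
Proof. by move=> C; rewrite -(mulgA A) C mulgA mulgK. Qed.

Lemma star_mk t1 t2 a b : T t1 -> T t2 -> (a < p)%N -> (b < p)%N ->
  star (mk t1 a) (mk t2 b) = mk (t1 * t2 ^ ((g : X) ^+ a)^-1) ((a + b) %% p).
Proof.
move=> T1 T2 ap bp.
rewrite /star cr_mk // mk_mul /mk /z.
by rewrite expVgn cancel_c //; exact: t0X_central.
Qed.

Definition phi (h : X) : X := tp h ^+ p * (g : X) ^+ (p.+1 * vp h).

Lemma phi_mk t a : T t -> (a < p)%N -> phi (mk t a) = mk (t ^+ p * t0 ^+ a) a.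
Proof.
move=> Tt ap; rewrite /phi tp_mk // vp_mk // /mk.
by rewrite mulSnr expgnDr expgnA -!mulgA.
Qed.

Lemma eM u v : (e u : X) * e v = e (u + v)%R.
Proof. by rewrite ehom. Qed.
Lemma eX u m : (e u : X) ^+ m = e (u *+ m)%R.
Proof.
elim: m => [|m IH]; last by rewrite expgS IH eM mulrS.
rewrite mulr0n; apply/esym/eker => i; rewrite mxE; exact: rpred0.
Qed.
Lemma T_e t : T t -> exists u, e u = t.
Proof. by move/piker. Qed.

Lemma conj_central (y : X) m : (t0 ^+ m) ^ y = t0 ^+ m.
Proof. by rewrite /conjg (t0X_central m y) mulKg. Qed.

Lemma phiM x y : phi (x * y) = star (phi x) (phi y).
Proof.
move: (T_tp x) (vp_lt x) (mk_tp x); move: (tp x) (vp x) => t1 a T1 ap <-.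
move: (T_tp y) (vp_lt y) (mk_tp y); move: (tp y) (vp y) => t2 b T2 bp <-.
have Tt0 := T_t0.
have Ts : T (t2 ^ ((g : X) ^+ a)^-1) by exact: TJ.
have Tc : T (t1 * t2 ^ ((g : X) ^+ a)^-1 * t0 ^+ ((a + b) %/ p)).
  apply: TM; last exact: TX. apply: TM. exact: T1. exact: Ts.
have rp : ((a + b) %% p < p)%N by rewrite ltn_pmod // p_gt0.
rewrite mk_mul (phi_mk _ _ Tc rp) (phi_mk _ _ T1 ap) (phi_mk _ _ T2 bp).
have Ta : T (t1 ^+ p * t0 ^+ a) by rewrite /T piM (TX _ _ T1) (TX _ _ Tt0) addr0.
have Tb : T (t2 ^+ p * t0 ^+ b) by rewrite /T piM (TX _ _ T2) (TX _ _ Tt0) addr0.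
rewrite (star_mk _ _ _ _ Ta Tb ap bp).
congr mk.
rewrite conjMg conj_central conjXg.
move: Ts; set s := t2 ^ _ => Ts.
have [u <-] := T_e _ T1.
have [v <-] := T_e _ Ts.
have [w <-] := T_e _ Tt0.
rewrite !eX !eM !eX !eM; congr e.
have E : ((a + b) %/ p * p + (a + b) %% p = a + b)%N by rewrite -divn_eq.
rewrite !mulrnDl -mulrnA -addrA -mulrnDr E mulrnDr.
by rewrite addrACA.
Qed.

Lemma phi1 : phi 1 = 1.
Proof.
have h1 : vp 1 = 0%N by rewrite /vp pi1.
rewrite /phi /tp h1 muln0 !expg0 invg1 !mulg1; elim: p => [//|k IH]; by rewrite expgS IH mulg1.
Qed.

Lemma phi_cont : continuous (phi : tg_car G -> tg_car G).
Proof.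
apply: cont_loc => x.
exists (fun u : X => (u * ((g : X) ^+ vp x)^-1) ^+ p * (g : X) ^+ (p.+1 * vp x)).
split.
  by apply: filterS (near_pi x) => u /= H; rewrite /phi /tp /vp H.
apply: (@mul_cont G X (fun u : X => (u * ((g : X) ^+ vp x)^-1) ^+ p)); last exact: cvg_cst.
apply: exp_cont; apply: (@mul_cont G X id); [exact: cvg_id | exact: cvg_cst].
Qed.

Lemma phi_surj (y : X) : exists x, phi x = y.
Proof.
rewrite -(mk_tp y).
have Ty := T_tp y; have ay := vp_lt y.
move: (tp y) (vp y) Ty ay => t a Tt ap.
have Tu : T (t * (t0 ^+ a)^-1) by apply: TM => //; apply: TV; apply: TX; exact: T_t0.
have [u Hu] := T_e _ Tu.
set t' := e ((p%:R)^-1 *: u)%R.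
have Tt' : T t' by apply/piker; exists ((p%:R)^-1 *: u)%R.
exists (mk t' a).
rewrite phi_mk // /t' eX.
have -> : (((p%:R)^-1 *: u) *+ p = u)%R.
  rewrite scalerMnl -mulr_natr mulVf ?scale1r //.
  by rewrite pnatr_eq0 -lt0n p_gt0.
by rewrite Hu mulgVK.
Qed.

Definition Hgrp : topGroup :=
  @TopGroup (tg_car G) star istar (tg_one G) star_assoc star1x starx1 starVx starxV
    star_cont istar_cont.

Lemma sec_main : exists (N : set G),
  closed_normal_subgroup N /\
    exists (H : topGroup) (phi : G -> H),
        [/\ hausdorff_space H /\ continuous phi, tg_hom phi,
            (forall h, exists g, phi g = h),
            (forall g, phi g = tg_one H <-> N g) &
            exists (e' : 'rV[R]_n -> H) (q : H -> 'Z_p) (s : 'Z_p -> H),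
              [/\ torus_ext e' q,
                  (forall a b, s (a + b)%R = tg_mul (s a) (s b)) &
                  (forall k, q (s k) = k)]].
Proof.
exists (fun x : X => phi x = 1); split.
  split.
  - have -> : (fun x : X => phi x = 1) = (phi : tg_car G -> tg_car G) @^-1` [set (1 : X)].
      by [].
    apply: (proj1 (continuous_closedP _) phi_cont).
    by apply: (@compact_closed (tg_car G)) => //; exact: compact_set1.
  - exact: phi1.
  - by move=> x y /= Hx Hy; rewrite (phiM x y) Hx Hy star1x.
  - move=> x /= Hx; have := phiM (x : X) (x : X)^-1; rewrite mulgV phi1 Hx star1x.
    by move=> <-.
  - move=> y x /= Hx.
    have := phiM ((y : X) * x) (y : X)^-1.
    rewrite (phiM y x) Hx starx1 -phiM mulgV phi1 => H; exact: H.
exists Hgrp, phi; split.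
- by split; [exact: Ghaus | exact: phi_cont].
- by move=> x y; exact: phiM.
- exact: phi_surj.
- by [].
exists e, pi, (fun k => (g : X) ^+ vz k); split.
- split.
  + split.
    * exact: econt.
    * move=> x y /=; rewrite T_star; first exact: ehom.
        by apply/piker; exists x.
      by apply/piker; exists y.
    * exact: eker.
  + by move=> x y; exact: pi_star.
  + exact: pisurj.
  + exact: piopen.
  + exact: piker.
- move=> a b.
  have E k : (g : X) ^+ k = mk 1 k by rewrite /mk mul1g.
  rewrite vzD !E; apply: esym.
  apply: etrans (star_mk _ _ _ _ T1 T1 (vz_lt a) (vz_lt b)) _.
  by rewrite /conjg !mul1g invgK mulgV.
- by move=> k /=; rewrite pigX vzK.
Qed.

End Main.

Theorem lemma2p4 (R : realType) (p n : nat) (G : topGroup)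
    (e : 'rV[R]_n -> G) (pi : G -> 'Z_p) :
  prime p -> (1 <= n)%N ->
  hausdorff_space G -> compact [set: G] ->
  torus_ext e pi ->
  exists (N : set G) (l : nat),
    [/\ closed_normal_subgroup N, (1 <= l)%N, (l <= n)%N &
      exists (H : topGroup) (phi : G -> H),
        [/\ hausdorff_space H /\ continuous phi, tg_hom phi,
            (forall h, exists g, phi g = h),
            (forall g, phi g = tg_one H <-> N g) &
            exists (e' : 'rV[R]_l -> H) (q : H -> 'Z_p) (s : 'Z_p -> H),
              [/\ torus_ext e' q,
                  (forall a b, s (a + b) = tg_mul (s a) (s b)) &
                  (forall k, q (s k) = k)]]].
Proof.
move=> pP n1 Ghaus Gcomp [[econt ehom eker] pihom pisurj piopen piker].
have [g pig] := pisurj 1%R.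
have [N [HN rest]] := @sec_main R p n G e pi pP Ghaus econt ehom eker pihom
  piopen pisurj piker g pig.
by exists N, n; split.
Qed.
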